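(* Let $\mathcal C$ be a hereditary class of graphs with infinite VC-dimension and let $H=(H_\ell\cup H_r,E)$ be a bipartite graph with bipartition $(H_\ell,H_r)$. Then at least one of the four graphs $H^{0,0},H^{1,0},H^{0,1},H^{1,1}$ belongs to $\mathcal C$.
   Context: A class of graphs is hereditary if it is closed under isomorphism and under taking induced subgraphs. A set $X\subseteq V(G)$ is shattered if for every $S\subseteq X$ there is a vertex $v$ with $N[v]\cap X=S$ (where $N[v]$ is the closed neighbourhood); the VC-dimension of $G$ is the largest size of a shattered set; a class has infinite VC-dimension if these are unbounded over the class. For a bipartite graph $H$ with bipartition $(A,B)$: $H^{0,0}=H$; $H^{1,0}$ is obtained from $H$ by adding all edges between vertices of $A$ (making $A$ a clique); $H^{0,1}$ is obtained by making $B$ a clique; $H^{1,1}$ is obtained by making both $A$ and $B$ cliques. *)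

(* Defs.v *)
From mathcomp Require Import all_boot.
Set Implicit Arguments. Unset Strict Implicit. Unset Printing Implicit Defensive.

Record sgraph := SGraph {
  svert :> finType;
  sadj : rel svert;
  sadj_sym : symmetric sadj;
  sadj_irr : irreflexive sadj }.

Definition graph_class := sgraph -> Prop.

Definition iso_closed (C : graph_class) : Prop :=
  forall (G H : sgraph) (f : G -> H), bijective f ->
    (forall x y, sadj x y = sadj (f x) (f y)) -> C G -> C H.

Definition induced_adj (G : sgraph) (A : {set G}) : rel {x : G | x \in A} :=
  fun x y => sadj (val x) (val y).

Lemma induced_sym (G : sgraph) (A : {set G}) : symmetric (@induced_adj G A).
Proof. by move=> x y; rewrite /induced_adj sadj_sym. Qed.

Lemma induced_irr (G : sgraph) (A : {set G}) : irreflexive (@induced_adj G A).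
Proof. by move=> x; rewrite /induced_adj sadj_irr. Qed.

Definition induced (G : sgraph) (A : {set G}) : sgraph :=
  @SGraph _ (@induced_adj G A) (@induced_sym G A) (@induced_irr G A).

Definition induced_closed (C : graph_class) : Prop :=
  forall (G : sgraph) (A : {set G}), C G -> C (induced A).

Definition hereditary (C : graph_class) : Prop := iso_closed C /\ induced_closed C.

Definition cnbhd (G : sgraph) (v : G) : {set G} := [set u | (u == v) || sadj v u].

Definition shattered (G : sgraph) (X : {set G}) : Prop :=
  forall S : {set G}, S \subset X -> exists v : G, cnbhd v :&: X = S.

Definition infinite_VC (C : graph_class) : Prop :=
  forall k : nat, exists (G : sgraph) (X : {set G}), C G /\ shattered X /\ k <= #|X|.

(* Bipartite graph H with sides L (left) and R (right), edges given by r.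
   bip_adj a b r is the adjacency of H^{a,b}: a = true makes L a clique,
   b = true makes R a clique. *)
Definition bip_adj (L R : finType) (a b : bool) (r : L -> R -> bool) : rel (L + R)%type :=
  fun x y => match x, y with
  | inl x, inl y => a && (x != y)
  | inr x, inr y => b && (x != y)
  | inl x, inr y => r x y
  | inr y, inl x => r x y
  end.

Lemma bip_sym L R a b r : symmetric (@bip_adj L R a b r).
Proof. by case=> [x|x] [y|y] //=; rewrite eq_sym. Qed.

Lemma bip_irr L R a b r : irreflexive (@bip_adj L R a b r).
Proof. by case=> [x|x] /=; rewrite eqxx andbF. Qed.

Definition Hab (L R : finType) (r : L -> R -> bool) (a b : bool) : sgraph :=
  @SGraph _ (bip_adj a b r) (@bip_sym L R a b r) (@bip_irr L R a b r).

(* Main.v *)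
Require Import Defs.
From mathcomp Require Import all_boot zify.
Set Implicit Arguments. Unset Strict Implicit.

Definition hom (T : finType) (e : rel T) (c : bool) (B : {set T}) :=
  forall x y, x \in B -> y \in B -> x != y -> e x y = c.

Lemma hom_add (T : finType) (e : rel T) (es : symmetric e) c B x :
  hom e c B -> (forall y, y \in B -> e x y = c) -> hom e c (x |: B).
Proof.
move=> hB hx u v; rewrite !in_setU1 => /orP[/eqP->|uB] /orP[/eqP->|vB] //;
  first by rewrite eqxx.
- by move=> _; apply: hx.
- by move=> _; rewrite es; apply: hx.
- exact: hB.
Qed.

Lemma ramsey (T : finType) (e : rel T) (es : symmetric e) m n (A : {set T}) :
  2 ^ (m + n) <= #|A| -> exists B : {set T}, B \subset A /\
   ((m <= #|B| /\ hom e true B) \/ (n <= #|B| /\ hom e false B)).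
Proof.
elim: m n A => [|m IHm] n.
  move=> A _; exists set0; split; first exact: sub0set.
  by left; split=> // x y; rewrite inE.
elim: n => [|n IHn] A.
  move=> _; exists set0; split; first exact: sub0set.
  by right; split=> // x y; rewrite inE.
move=> hA.
have [A0|[x xA]] := set_0Vmem A.
  by move: hA; rewrite A0 cards0 leqn0 expn_eq0.
pose P := [set y | e x y].
pose N := (A :\ x) :&: P.
pose M := (A :\ x) :\: P.
have hc : #|N| + #|M| = #|A| - 1.
  by rewrite cardsID (cardsD1 x A) xA; lia.
have hNM : 2 ^ (m + n.+1) <= #|N| \/ 2 ^ (m.+1 + n) <= #|M|.
  move: hA; rewrite !addSn !addnS !expnS => hA; lia.
have xnB : forall B : {set T}, B \subset A :\ x -> x \notin B.
  move=> B sB; apply/negP=> /(subsetP sB); by rewrite in_setD1 eqxx.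
have NA : N \subset A :\ x by apply: subsetIl.
have MA : M \subset A :\ x by apply: subsetDl.
have AxA : A :\ x \subset A by apply: subsetDl.
case: hNM => [hN|hM].
  have [B [sB [[hm hB]|[hn hB]]]] := IHm _ _ hN.
    exists (x |: B); split.
      by rewrite subUset sub1set xA (subset_trans sB (subset_trans NA AxA)).
    left; split.
      by rewrite cardsU1 xnB ?(subset_trans sB NA).
    apply: hom_add => // y /(subsetP sB); rewrite inE /P inE; by case/andP.
  exists B; split; first by rewrite (subset_trans sB (subset_trans NA AxA)).
  by right.
have [B [sB [[hm hB]|[hn hB]]]] := IHn _ hM.
  exists B; split; first by rewrite (subset_trans sB (subset_trans MA AxA)).
  by left.
exists (x |: B); split.
  by rewrite subUset sub1set xA (subset_trans sB (subset_trans MA AxA)).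
right; split.
  by rewrite cardsU1 xnB ?(subset_trans sB MA).
apply: hom_add => // y /(subsetP sB); rewrite inE /P inE; case/andP=> /negbTE -> //.
Qed.

Lemma inj_into (K T : finType) (B : {set T}) :
  #|K| <= #|B| -> exists e : K -> T, injective e /\ forall k, e k \in B.
Proof.
move=> h.
exists (fun k => @enum_val T (mem B) (widen_ord h (enum_rank k))); split.
  move=> k k' /enum_val_inj /(congr1 val) /= /val_inj; exact: enum_rank_inj.
by move=> k; exact: (enum_valP (widen_ord h (enum_rank k))).
Qed.

Theorem mainTheorem7 (C : graph_class) (hC : hereditary C) (hVC : infinite_VC C)
  (L R : finType) (r : L -> R -> bool) :
  C (Hab r false false) \/ C (Hab r true false) \/
  C (Hab r false true) \/ C (Hab r true true).
Proof.
move: hC => [hiso hind].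
pose M := 2 ^ (#|R| + #|R|).
pose K := ({set 'I_M} * 'I_(#|L|).+2)%type.
have [G [X [CG [shX hX]]]] := hVC (2 ^ (#|{: K}| + #|{: K}|)).
have [B1 [sB1 hB1]] := ramsey (@sadj_sym G) hX.
have [a [ha hB1a]] : exists a, #|{: K}| <= #|B1| /\ hom (@sadj G) a B1.
  by case: hB1 => [[h1 h2]|[h1 h2]]; [exists true|exists false].
have [e [einj eB]] := inj_into ha.
have eX k : e k \in X := subsetP sB1 _ (eB k).
have ehom k k' : k != k' -> sadj (e k) (e k') = a.
  by move=> nk; apply: hB1a; rewrite ?eB // (inj_eq einj).
pose S (i : 'I_M) : {set G} := e @: [set k : K | i \in k.1].
have hw i : exists v : G, cnbhd v :&: X == S i.
  have [|v hv] := shX (S i).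
    by apply/subsetP=> y /imsetP [k _ ->].
  by exists v; apply/eqP.
pose w i := xchoose (hw i).
have wtr i k : (e k \in cnbhd (w i)) = (i \in k.1).
  have := xchooseP (hw i); rewrite -/(w i) => /eqP hS.
  have -> : (e k \in cnbhd (w i)) = (e k \in cnbhd (w i) :&: X).
    by rewrite in_setI eX andbT.
  by rewrite hS mem_imset // inE.
have cnE (v u : G) : (u \in cnbhd v) = (u == v) || sadj v u by rewrite inE.
have winj : injective w.
  move=> i i' hii.
  have := wtr i' ([set i], ord0); rewrite -hii wtr /= !inE => /esym /eqP.
  by rewrite eqxx => ->.
have wnx i k : w i != e k.
  apply/eqP=> hwk.
  have ik : i \in k.1 by rewrite -wtr cnE hwk eqxx.
  case: a {hB1a ha} ehom => ehom.
    have := wtr i (set0, ord0); rewrite cnE /= inE hwk ehom ?orbT //.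
    by apply/eqP => hk; move: ik; rewrite hk inE.
  pose c' : 'I_(#|L|).+2 := if k.2 == ord0 then inord 1 else ord0.
  have hc' : c' != k.2.
    rewrite /c'; case: ifP => [/eqP ->|/negbT]; last by rewrite eq_sym.
    by apply/eqP => /(congr1 val); rewrite /= inordK.
  have nk : (k.1, c') != k.
    by apply/eqP => hk; move: hc'; rewrite -hk /= eqxx.
  have := wtr i (k.1, c'); rewrite ik cnE hwk (inj_eq einj) ehom //.
  by rewrite (negbTE nk).
  by rewrite eq_sym.
pose ew := fun i i' => sadj (w i) (w i').
have ews : symmetric ew by move=> i i'; rewrite /ew sadj_sym.
have hM : 2 ^ (#|R| + #|R|) <= #|[set: 'I_M]| by rewrite cardsT card_ord.
have [B2 [_ hB2]] := @ramsey _ ew ews #|R| #|R| [set: 'I_M] hM.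
have [b [hb hB2b]] : exists b, #|R| <= #|B2| /\ hom ew b B2.
  by case: hB2 => [[h1 h2]|[h1 h2]]; [exists true|exists false].
have [idx [idxinj idxB]] := inj_into hb.
pose kx (l : L) : K := ([set idx j | j in R & r l j],
   widen_ord (leq_trans (leqnSn _) (leqnSn _)) (enum_rank l)).
pose x (l : L) : G := e (kx l).
have xinj : injective x.
  move=> l l' /einj h; have := congr1 (fun k : K => val k.2) h => /= /val_inj.
  exact: enum_rank_inj.
pose f0 (z : (L + R)%type) : G := match z with inl l => x l | inr j => w (idx j) end.
have f0inj : injective f0.
  case=> [l|j] [l'|j'] /=.
  - by move=> /xinj ->.
  - by move=> h; have := wnx (idx j') (kx l); rewrite -h eqxx.
  - by move=> h; have := wnx (idx j) (kx l'); rewrite h eqxx.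
  - by move=> /winj /idxinj ->.
have xw l j : sadj (w (idx j)) (x l) = r l j.
  have := wtr (idx j) (kx l).
  rewrite cnE eq_sym (negbTE (wnx _ _)) /= => ->.
  by rewrite mem_imset // inE.
have adj z z' : sadj (f0 z) (f0 z') = bip_adj a b r z z'.
  case: z z' => [l|j] [l'|j'] /=.
  - have [->|nl] := eqVneq l l'; first by rewrite sadj_irr andbF.
    rewrite andbT ehom //; apply: contra nl => /eqP h; apply/eqP; apply: xinj.
    by rewrite /x h.
  - by rewrite sadj_sym xw.
  - by rewrite xw.
  - have [->|nj] := eqVneq j j'; first by rewrite sadj_irr andbF.
    by rewrite andbT; apply: hB2b; rewrite ?idxB // (inj_eq idxinj).
pose V := f0 @: [set: (L + R)%type].
have CV := hind G V CG.
pose g (z : Hab r a b) : induced V := exist (fun y => y \in V) (f0 z) (imset_f f0 (in_setT z)).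
have ginj : injective g by move=> z z' /(congr1 val) /= /f0inj.
have gbij : bijective g.
  apply: (inj_card_bij ginj).
  rewrite card_sig /= -/V.
  have -> : #|[pred y | y \in V]| = #|V| by apply: eq_card.
  by rewrite card_imset // cardsT.
case: gbij => h gh hg.
have CH : C (Hab r a b).
  apply: (hiso (induced V) (Hab r a b) h).
  - by exists g.
  - move=> u v; rewrite -{1}(hg u) -{1}(hg v).
    by rewrite /= /induced_adj /= adj.
  - exact: CV.
move: CH; clear -C r; case: a; case: b; tauto.
Qed.
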